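(* Let $n\ge2$, $A=\{a_1,\dots,a_k\}$ finite and $u_1,\dots,u_n:A\to\mathbb{R}$. In every subgame-perfect Nash equilibrium of the $P^{n-1}\&C$ game, each player $j\in\{2,\dots,n\}$ obtains payoff $\mathrm{Avg}_j$, and player 1 obtains payoff $\max(u)-\sum_{j=2}^n\mathrm{Avg}_j$.
   Context: Players have quasi-linear utilities $u_i(a)+t_i$. $\mathrm{Avg}_j=\frac1k\sum_{l=1}^k u_j(a_l)$ and $\max(u)=\max_{a\in A}\sum_{i=1}^n u_i(a)$. Let $P=\{p\in\mathbb{R}^k:\sum_j p_j=0\}$. The $P^{n-1}\&C$ game: player 1 chooses $p^2\in P$; then for $i=2,\dots,n-1$ in order, player $i$, having observed $p^2,\dots,p^i$, chooses $p^{i+1}\in P$; finally player $n$, having observed $p^2,\dots,p^n$, chooses an option $a\in A$. Payoffs: $g_1=u_1(a)+p^2(a)$; $g_m=u_m(a)-p^m(a)+p^{m+1}(a)$ for $2\le m\le n-1$; $g_n=u_n(a)-p^n(a)$. Pure strategies map histories to actions; a subgame-perfect Nash equilibrium is a profile inducing a Nash equilibrium in every subgame. *)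

(* Defs.v *)
From HB Require Import structures.
From mathcomp Require Import all_boot all_order all_algebra.
From mathcomp Require Export reals.
Set Implicit Arguments. Unset Strict Implicit. Unset Printing Implicit Defensive.
Import Order.TTheory GRing.Theory Num.Theory.
Local Open Scope ring_scope.

(* Players are indexed 1..n (nat); options form a finite type A (= {a_1,...,a_k}, k = #|A|). *)

Definition Pv (R : numDomainType) (A : finType) :=
  {p : A -> R | \sum_(a : A) p a == 0}.

Lemma zero_in_P (R : numDomainType) (A : finType) :
  \sum_(a : A) (fun _ : A => (0 : R)) a == 0.
Proof. by rewrite big1. Qed.

Definition p0 (R : numDomainType) (A : finType) : Pv R A :=
  exist _ (fun _ => 0) (zero_in_P R A).

(* A history is the sequence [p^2; ...; p^l] of price vectors chosen so far. *)
(* Pure strategy profile: player m (1 <= m <= n-1) chooses p^{m+1} as a function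
   of the history [p^2;...;p^m] (pstrat m); player n chooses an option as a
   function of the full history [p^2;...;p^n] (cstrat). *)
Record profile (R : numDomainType) (A : finType) := Profile {
  pstrat : nat -> seq (Pv R A) -> Pv R A;
  cstrat : seq (Pv R A) -> A }.

(* after history h (of size l), the player to move is player l+1 *)
Fixpoint extend (R : numDomainType) (A : finType) (s : profile R A)
    (fuel : nat) (h : seq (Pv R A)) : seq (Pv R A) :=
  match fuel with
  | 0 => h
  | f.+1 => extend s f (rcons h (pstrat s (size h).+1 h))
  end.

Definition full_history (R : numDomainType) (A : finType) (n : nat)
    (s : profile R A) (h : seq (Pv R A)) : seq (Pv R A) :=
  extend s (n.-1 - size h) h.

Definition outcome_option (R : numDomainType) (A : finType) (n : nat)
    (s : profile R A) (h : seq (Pv R A)) : A :=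
  cstrat s (full_history n s h).

Definition price (R : numDomainType) (A : finType) (hf : seq (Pv R A))
    (j : nat) (a : A) : R :=
  sval (nth (p0 R A) hf (j - 2)) a.

(* g_1 = u_1 + p^2, g_m = u_m - p^m + p^{m+1}, g_n = u_n - p^n *)
Definition payoff (R : numDomainType) (A : finType) (u : nat -> A -> R)
    (n m : nat) (hf : seq (Pv R A)) (a : A) : R :=
  u m a - (if (2 <= m)%N then price hf m a else 0)
        + (if (m < n)%N then price hf m.+1 a else 0).

Definition game_payoff (R : numDomainType) (A : finType) (u : nat -> A -> R)
    (n : nat) (s : profile R A) (h : seq (Pv R A)) (m : nat) : R :=
  payoff u n m (full_history n s h) (outcome_option n s h).

Definition deviation (R : numDomainType) (A : finType) (n i : nat)
    (s s' : profile R A) : Prop :=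
  (forall m, m != i -> pstrat s' m = pstrat s m) /\
  (i != n -> cstrat s' = cstrat s).

Definition is_SPE (R : numDomainType) (A : finType) (u : nat -> A -> R)
    (n : nat) (s : profile R A) : Prop :=
  forall h : seq (Pv R A), (size h <= n.-1)%N ->
  forall i, (1 <= i <= n)%N ->
  forall s', deviation n i s s' ->
    game_payoff u n s' h i <= game_payoff u n s h i.

Definition Avg (R : numFieldType) (A : finType) (u : nat -> A -> R) (j : nat) : R :=
  (#|A|%:R)^-1 * \sum_(a : A) u j a.

Definition sumu (R : numDomainType) (A : finType) (u : nat -> A -> R)
    (n : nat) (a : A) : R :=
  \sum_(1 <= i < n.+1) u i a.

(* max_{a in A} sum_i u_i(a); a0 is any element of A (result independent of it) *)
Definition maxu (R : realDomainType) (A : finType) (u : nat -> A -> R)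
    (n : nat) (a0 : A) : R :=
  \big[Num.max/sumu u n a0]_(a : A) sumu u n a.

(* Main.v *)
Require Import Defs.
From HB Require Import structures.
From mathcomp Require Import all_boot all_order all_algebra.
From mathcomp Require Import reals.
From mathcomp Require Import ring lra zify.
Import Order.TTheory GRing.Theory Num.Theory.
Set Implicit Arguments. Unset Strict Implicit.
Local Open Scope ring_scope.

Lemma sum_delta (R : numDomainType) (A : finType) (t : A) :
  \sum_(a : A) (a == t)%:R = 1 :> R.
Proof. by rewrite (bigD1 t) //= eqxx big1 ?addr0 // => a /negbTE ->. Qed.

Lemma sum_const_card (R : numDomainType) (A : finType) (c : R) :
  \sum_(a : A) c = #|A|%:R * c.
Proof. by rewrite sumr_const mulr_natl. Qed.

Lemma avg_le_max (R : numDomainType) (A : finType) (f : A -> R) x :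
  (forall a, f a <= f x) -> \sum_a f a <= #|A|%:R * f x.
Proof. by move=> H; rewrite -sum_const_card; apply: ler_sum => a _; apply: H. Qed.

Definition pdel (R : numFieldType) (A : finType) (V : A -> R) (S d : R) (t : A)
  (hV : \sum_a V a = #|A|%:R * S) : Pv R A.
Proof.
exists (fun a => V a - S - d * (#|A|%:R * (a == t)%:R - 1)).
apply/eqP; rewrite !sumrB -mulr_sumr sumrB -mulr_sumr sum_delta !sum_const_card hV.
ring.
Defined.

Lemma key (R : realType) (A : finType) (Wm V : A -> R) (S : R)
  (ap : Pv R A -> A) (ps : Pv R A) :
  \sum_a V a = #|A|%:R * S ->
  (forall p a, V a - sval p a <= V (ap p) - sval p (ap p)) ->
  (forall p, Wm (ap p) - (V (ap p) - sval p (ap p)) <=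
             Wm (ap ps) - (V (ap ps) - sval ps (ap ps))) ->
  (forall a, Wm a <= Wm (ap ps)) /\ V (ap ps) - sval ps (ap ps) = S.
Proof.
move=> hV hmax hF.
have k0 : (0 < #|A|)%N by apply/card_gt0P; exists (ap ps).
have kp : 0 < #|A|%:R :> R by rewrite ltr0n.
have st1 : forall p, S <= V (ap p) - sval p (ap p).
  move=> p; rewrite -(ler_pM2l kp).
  have := avg_le_max (hmax p); rewrite sumrB hV.
  by move/eqP: (valP p) => ->; rewrite subr0.
have st2 : forall t, Wm t - S <= Wm (ap ps) - (V (ap ps) - sval ps (ap ps)).
  move=> t; apply/ler_addgt0Pr => e e0.
  set d := e / #|A|%:R.
  have d0 : 0 < d by rewrite divr_gt0.
  have dk : d * #|A|%:R = e by rewrite /d mulfVK // gt_eqF.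
  set p := pdel d t hV.
  have ht := hmax p t; have Fp := hF p.
  rewrite /= eqxx in ht Fp.
  have ept : ap p = t.
    apply/eqP; apply/negPn/negP => /negbTE ne.
    move: ht; rewrite /= ne ?mulr1n ?mulr0n ?mulr1 ?mulr0; clearbody d; have := mulr_gt0 d0 kp; lra.
  move: Fp; rewrite ept /= eqxx ?mulr1n ?mulr1; clearbody d; rewrite -dk => H; clear -H d0 kp; lra.
have h1 := st1 ps. have h2 := st2 (ap ps).
split; last by lra.
by move=> a; have := st2 a; lra.
Qed.

Lemma extend_cat (R : numDomainType) (A : finType) (s : profile R A) f h :
  exists t, extend s f h = h ++ t.
Proof.
elim: f h => [|f IH] h /=; first by exists [::]; rewrite cats0.
have [t ->] := IH (rcons h (pstrat s (size h).+1 h)).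
by exists (pstrat s (size h).+1 h :: t); rewrite -cats1 -catA.
Qed.

Definition devP (R : numDomainType) (A : finType) (s : profile R A) (m : nat)
  (p : Pv R A) : profile R A :=
  Profile (fun j => if j == m then (fun _ : seq (Pv R A) => p) else pstrat s j)
    (cstrat s).

Lemma extend_devP (R : numDomainType) (A : finType) (s : profile R A) m p f h :
  (m <= size h)%N -> extend (devP s m p) f h = extend s f h.
Proof.
elim: f h => [|f IH] h hm //=.
rewrite gtn_eqF ?ltnS //; apply: IH; rewrite size_rcons; exact: leqW.
Qed.

Lemma price_lt (R : numDomainType) (A : finType) (h t : seq (Pv R A)) j a :
  (j - 2 < size h)%N -> price (h ++ t) j a = price h j a.
Proof. by move=> hj; rewrite /price nth_cat hj. Qed.

Lemma price_at (R : numDomainType) (A : finType) (h t : seq (Pv R A)) p a :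
  price (h ++ p :: t) (size h).+2 a = sval p a.
Proof. by rewrite /price !subSS subn0 nth_cat ltnn subnn. Qed.

Definition Wf (R : numDomainType) (A : finType) (u : nat -> A -> R) (n m : nat)
  (h : seq (Pv R A)) (a : A) : R :=
  u m a - (if (2 <= m)%N then price h m a else 0) + \sum_(m.+1 <= j < n.+1) u j a.

Definition Sa (R : numFieldType) (A : finType) (u : nat -> A -> R) (n m : nat) : R :=
  \sum_(m.+1 <= j < n.+1) Avg u j.

Definition Inv (R : realType) (A : finType) (u : nat -> A -> R) (n : nat)
  (s : profile R A) (h : seq (Pv R A)) : Prop :=
  (forall a, Wf u n (size h).+1 h a <= Wf u n (size h).+1 h (outcome_option n s h)) /\
  (forall j, ((size h).+1 < j <= n)%N -> game_payoff u n s h j = Avg u j) /\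
  game_payoff u n s h (size h).+1 =
    Wf u n (size h).+1 h (outcome_option n s h) - Sa u n (size h).+1.

Lemma bigmax_eq (R : realDomainType) (A : finType) (f : A -> R) x0 t :
  x0 <= f t -> (forall a, f a <= f t) -> \big[Num.max/x0]_(a : A) f a = f t.
Proof.
move=> h0 hf; apply/le_anti/andP; split.
  by elim/big_ind: _ => // x y hx hy; rewrite ge_max hx hy.
by rewrite (bigD1 t) //= le_max lexx.
Qed.

Lemma sumV (R : realType) (A : finType) (u : nat -> A -> R) (a0 : A) n m :
  \sum_(a : A) \sum_(m.+1 <= j < n.+1) u j a = #|A|%:R * Sa u n m.
Proof.
have k0 : (#|A|%:R : R) != 0 by rewrite pnatr_eq0 -lt0n; apply/card_gt0P; exists a0.
rewrite exchange_big /Sa mulr_sumr; apply: eq_bigr => j _.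
by rewrite /Avg mulrA mulfV // mul1r.
Qed.

Lemma inv_all (R : realType) (A : finType) (a0 : A) n (hn : (2 <= n)%N)
  (u : nat -> A -> R) s :
  is_SPE u n s -> forall d h, (size h + d)%N = n.-1 -> Inv u n s h.
Proof.
move=> spe; elim=> [|d IH] h hd.
  rewrite addn0 in hd.
  have hm : (size h).+1 = n by lia.
  have fh : forall s', full_history n s' h = h.
    by move=> s'; rewrite /full_history hd subnn.
  have pw : forall a, payoff u n n h a = Wf u n n h a.
    by move=> a; rewrite /payoff /Wf hn ltnn big_geq.
  rewrite /Inv /game_payoff /outcome_option !fh hm.
  split; [|split].
  - move=> a.
    have dev : deviation n n s (Profile (pstrat s) (fun _ => a)).
      by split => //; rewrite eqxx.
    have := spe h (eq_leq hd) n (introT andP (conj (ltnW hn) (leqnn n))) _ dev.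
    by rewrite /game_payoff /outcome_option !fh /= -!pw.
  - move=> j /andP [h1 h2]; lia.
  - by rewrite pw /Sa big_geq // subr0.
have fuel : (n.-1 - size h = d.+1)%N by lia.
have fuel' : forall p, (n.-1 - size (rcons h p) = d)%N by move=> p; rewrite size_rcons; lia.
have hmn : ((size h).+1 < n)%N by lia.
have relh : forall (s' : profile R A) p, pstrat s' (size h).+1 h = p ->
    full_history n s' h = full_history n s' (rcons h p).
  by move=> s' p H; rewrite /full_history fuel fuel' /= H.
set ps := pstrat s (size h).+1 h.
have relS : forall j, game_payoff u n s h j = game_payoff u n s (rcons h ps) j.
  by move=> j; rewrite /game_payoff /outcome_option (relh s ps).
have relO : outcome_option n s h = outcome_option n s (rcons h ps).
  by rewrite /outcome_option (relh s ps).
have relD : forall p j, game_payoff u n (devP s (size h).+1 p) h j =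
                        game_payoff u n s (rcons h p) j.
  move=> p j; rewrite /game_payoff /outcome_option (relh _ p) /=; last by rewrite eqxx.
  by rewrite /full_history extend_devP // size_rcons.
have IHp : forall p, Inv u n s (rcons h p).
  by move=> p; apply: IH; rewrite size_rcons addSnnS.
set V := fun a => \sum_((size h).+2 <= j < n.+1) u j a.
have Wform : forall p a, Wf u n (size h).+2 (rcons h p) a = V a - sval p a.
  move=> p a; rewrite /Wf /V [in RHS]big_ltn; last by lia.
  rewrite (_ : (2 <= (size h).+2)%N) // -cats1 price_at.
  by lra.
set ap := fun p => outcome_option n s (rcons h p).
have Fform : forall p, game_payoff u n s (rcons h p) (size h).+1 =
    Wf u n (size h).+1 h (ap p) - (V (ap p) - sval p (ap p)).
  move=> p; rewrite /game_payoff /ap /full_history.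
  case: (extend_cat s (n.-1 - size (rcons h p))%N (rcons h p)) => t ->.
  rewrite /payoff hmn. rewrite -cats1 -catA /=. rewrite (price_at h t p). rewrite /Wf.
  case: ifP => h2; last by rewrite /V; lra.
  rewrite price_lt; last by move: h2; clear; lia.
  by rewrite /V; lra.


have hV : \sum_a V a = #|A|%:R * Sa u n (size h).+1.
  exact: (sumV u a0 n (size h).+1).
have hmax : forall p a, V a - sval p a <= V (ap p) - sval p (ap p).
  move=> p a; have [H _] := IHp p; move: (H a); rewrite /ap size_rcons !Wform.
  by [].
have hF : forall p, Wf u n (size h).+1 h (ap p) - (V (ap p) - sval p (ap p)) <=
    Wf u n (size h).+1 h (ap ps) - (V (ap ps) - sval ps (ap ps)).
  move=> p; rewrite -(Fform p) -(Fform ps) -relS -relD.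
  apply: spe; first by lia.
    by apply/andP; split; lia.
  split => [j /negbTE ne|] /=; [by rewrite ne | by []].
have [k1 k2] := key (Wm := Wf u n (size h).+1 h) hV hmax hF.
have [_ [Hb Hc]] := IHp ps.
rewrite size_rcons in Hb Hc.
change (outcome_option n s (rcons h ps)) with (ap ps) in Hc.
rewrite /Inv relO.
change (outcome_option n s (rcons h ps)) with (ap ps).
split; [exact: k1|split].
- move=> j /andP [hj1 hj2]; rewrite relS.
  case E: (j == (size h).+2).
    move/eqP: E => ->; rewrite Hc Wform k2 /Sa big_ltn; last by lia.
    by rewrite addrK.
  by apply: Hb; apply/andP; split; lia.
- by rewrite relS (Fform ps) k2.
Qed.


Theorem mainTheorem7 (R : realType) (A : finType) (a0 : A) (n : nat)
    (hn : (2 <= n)%N) (u : nat -> A -> R) (s : profile R A) :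
  is_SPE u n s ->
  (forall j, (2 <= j <= n)%N -> game_payoff u n s [::] j = Avg u j) /\
  game_payoff u n s [::] 1 = maxu u n a0 - \sum_(2 <= j < n.+1) Avg u j.
Proof.
move=> spe.
have := inv_all a0 hn spe (d := n.-1) (h := [::]) (add0n _).
case=> [Ha [Hb Hc]].
split; first by move=> j hj; apply: Hb.
have hs : forall a, sumu u n a = Wf u n 1 [::] a.
  move=> a; rewrite /sumu /Wf big_ltn; last by lia.
  rewrite /=; lra.
rewrite Hc /maxu (@bigmax_eq _ _ _ _ (outcome_option n s [::])).
- by rewrite hs.
- by rewrite !hs; apply: Ha.
- by move=> a; rewrite !hs; apply: Ha.
Qed.
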